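(* For all $n\geq 0$, the bijection $\Psi_n:\mathfrak{S}_n\to\mathcal{PP}(n)$ is an isomorphism of posets when $\mathfrak{S}_n$ is ordered by the weak Bruhat order and $\mathcal{PP}(n)$ by $\leq$: for all $\sigma,\tau\in\mathfrak{S}_n$, $\sigma\leq\tau$ if and only if $\Psi_n(\sigma)\leq\Psi_n(\tau)$.
   Context: A plane poset is a finite set with two partial orders $\leq_h,\leq_r$ such that two distinct elements are $\leq_h$-comparable iff they are not $\leq_r$-comparable; $\mathcal{PP}(n)$ is the set of isomorphism classes of plane posets with $n$ elements. On a plane poset, $x\leq y$ iff ($x\leq_h y$ or $x\leq_r y$) is a total order (known fact). For $P,Q\in\mathcal{PP}(n)$, $\theta_{P,Q}$ is the increasing bijection $P\to Q$ for these total orders, and $P\leq Q$ means: for all $x,y\in P$, $\theta_{P,Q}(x)\leq_h\theta_{P,Q}(y)$ in $Q$ implies $x\leq_h y$ in $P$. For $\sigma\in\mathfrak{S}_n$, $\Psi_n(\sigma)$ is the plane poset on $\{1,\ldots,n\}$ with $a\leq_h b$ iff ($a\leq b$ and $\sigma^{-1}(a)\leq\sigma^{-1}(b)$) and $a\leq_r b$ iff ($a\leq b$ and $\sigma^{-1}(a)\geq\sigma^{-1}(b)$); $\Psi_n$ is known to be a bijection. The weak Bruhat order on $\mathfrak{S}_n$: $\sigma\leq\tau$ iff there is a sequence $\sigma=\sigma_0,\ldots,\sigma_k=\tau$ where each word $\sigma_{p+1}(1)\cdots\sigma_{p+1}(n)$ is obtained from $\sigma_p(1)\cdots\sigma_p(n)$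 by exchanging two consecutive letters $ij$ with $i<j$ (into $ji$). *)

(* Defs.v *)
From mathcomp Require Import all_boot all_fingroup.
Set Implicit Arguments. Unset Strict Implicit. Unset Printing Implicit Defensive.

Record pposet (T : finType) := PPoset { le_h : rel T; le_r : rel T }.

Definition partial_order (T : finType) (R : rel T) : Prop :=
  reflexive R /\ antisymmetric R /\ transitive R.

(* The plane poset axioms (for documentation; Psi_n is known to produce them). *)
Definition is_plane_poset (T : finType) (P : pposet T) : Prop :=
  partial_order (le_h P) /\ partial_order (le_r P) /\
  forall x y, x != y ->
    (le_h P x y || le_h P y x) = ~~ (le_r P x y || le_r P y x).

Definition ptot (T : finType) (P : pposet T) : rel T :=
  fun x y => le_h P x y || le_r P x y.

Definition increasing_bij (T U : finType) (P : pposet T) (Q : pposet U)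
  (theta : T -> U) : Prop :=
  bijective theta /\ forall x y, ptot P x y = ptot Q (theta x) (theta y).

(* P <= Q : for all x y, theta(x) <=_h theta(y) in Q implies x <=_h y in P,
   where theta = theta_{P,Q} is the (unique) increasing bijection. *)
Definition pp_le (T U : finType) (P : pposet T) (Q : pposet U) : Prop :=
  forall theta : T -> U, increasing_bij P Q theta ->
    forall x y, le_h Q (theta x) (theta y) -> le_h P x y.

(* Psi_n(sigma), on {0,...,n-1} instead of {1,...,n}. *)
Definition Psi (n : nat) (s : 'S_n) : pposet 'I_n :=
  PPoset (fun a b : 'I_n => (a <= b)%N && ((s^-1)%g a <= (s^-1)%g b)%N)
         (fun a b : 'I_n => (a <= b)%N && ((s^-1)%g b <= (s^-1)%g a)%N).

(* One step of the weak Bruhat order: the word s(0)...s(n-1) has letters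
   i j (i < j) at consecutive positions k, k+1, and t is obtained by
   exchanging them into j i. *)
Definition wb_step (n : nat) (s t : 'S_n) : Prop :=
  exists (p q : 'I_n), q = p.+1 :> nat /\ (s p < s q)%N /\
    forall x, t x = s (tperm p q x).

Inductive wb_le (n : nat) (s : 'S_n) : 'S_n -> Prop :=
  | wb_refl : wb_le s s
  | wb_next : forall r t, wb_le s r -> wb_step r t -> wb_le s t.

(* Main.v *)
Require Import Defs.
From mathcomp Require Import all_boot all_fingroup.
From mathcomp Require Import zify.
Set Implicit Arguments. Unset Strict Implicit. Unset Printing Implicit Defensive.

Lemma incr_id n (f : 'I_n -> 'I_n) :
  (forall i j : 'I_n, j = i.+1 :> nat -> f i < f j) -> forall i, f i = i.
Proof.
move=> H.
have lo : forall k (i : 'I_n), i = k :> nat -> k <= f i.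
  elim=> [//|k IH] i ik.
  have kn : k < n by apply: ltnW; rewrite -ik ltn_ord.
  have := H (Ordinal kn) i ik; have := IH (Ordinal kn) erefl. lia.
have hi : forall d (i : 'I_n), i + d = n.-1 -> f i <= i.
  elim=> [|d IH] i id.
    have := ltn_ord (f i); have := ltn_ord i; lia.
  have jn : i.+1 < n by have := ltn_ord i; lia.
  have := H i (Ordinal jn) erefl.
  have := IH (Ordinal jn) ltac:(rewrite /=; lia). rewrite /=. lia.
move=> i; apply: val_inj; apply/eqP; rewrite eqn_leq (hi (n.-1 - i)) ?(lo i i) //.
have := ltn_ord i; lia.
Qed.

Definition inv n (s : 'S_n) (x y : 'I_n) : bool :=
  (x < y) && ((s^-1)%g y < (s^-1)%g x)%N.

Lemma ptot_Psi n (s : 'S_n) x y : ptot (Psi s) x y = (x <= y).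
Proof. by rewrite /ptot /= -andb_orr leq_total andbT. Qed.

Lemma pp_le_iff n (s t : 'S_n) :
  pp_le (Psi s) (Psi t) <-> (forall x y, inv s x y -> inv t x y).
Proof.
split.
  move=> H x y /andP[xy sxy]; apply/andP; split=>//; rewrite ltnNge; apply/negP=> txy.
  have idb : increasing_bij (Psi s) (Psi t) id.
    by split; [exists id | move=> a b; rewrite !ptot_Psi].
  have := H id idb x y; rewrite /= (ltnW xy) txy => /(_ isT) /andP[_].
  by rewrite leqNgt sxy.
move=> H theta [bij mono] x y.
have thid : forall i, theta i = i.
  apply: incr_id => i j ij.
  have := mono j i; rewrite !ptot_Psi => m.
  by rewrite ltnNge -m -ltnNge ij.
rewrite !thid /= => /andP[xy txy]; apply/andP; split=>//.
rewrite leqNgt; apply/negP => sxy.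
have [exy|nxy] := eqVneq x y; first by rewrite exy ltnn in sxy.
have xy' : x < y by rewrite ltn_neqAle xy andbT.
have /andP[_] := H x y ltac:(by rewrite /inv xy' sxy).
by rewrite ltnNge txy.
Qed.

Lemma tperm_val n (p q z : 'I_n) :
  nat_of_ord (tperm p q z) = if nat_of_ord z == nat_of_ord p then nat_of_ord q
    else if nat_of_ord z == nat_of_ord q then nat_of_ord p else nat_of_ord z.
Proof.
case: tpermP => [->|->|/eqP nzp /eqP nzq]; rewrite ?eqxx //.
- case: eqP => // /val_inj ->; by rewrite eqxx.
- by case: eqP => [/val_inj/eqP|_]; [rewrite (negbTE nzp)|case: eqP => [/val_inj/eqP|_]; rewrite ?(negbTE nzq)].
Qed.

Lemma L1 n (p q a b : 'I_n) : q = p.+1 :> nat -> a < b -> ~ (a = p :> nat /\ b = q :> nat) ->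
  tperm p q a < tperm p q b.
Proof.
move=> pq ab nab; rewrite !tperm_val.
repeat (case: ifP => /eqP ?); try lia.
Qed.

Lemma L2 n (p q a b : 'I_n) : q = p.+1 :> nat -> tperm p q a < tperm p q b ->
  a < b \/ (a = q :> nat /\ b = p :> nat).
Proof.
move=> pq; rewrite !tperm_val.
repeat (case: ifP => /eqP ?); try lia.
Qed.

Lemma stepV n (r t : 'S_n) (p q : 'I_n) :
  (forall x, t x = r (tperm p q x)) -> forall y, (t^-1)%g y = tperm p q ((r^-1)%g y).
Proof. by move=> H y; apply: (@perm_inj _ t); rewrite permKV H tpermK permKV. Qed.

Lemma step_incl n (r t : 'S_n) : wb_step r t -> forall x y, inv r x y -> inv t x y.
Proof.
move=> [p [q [pq [rpq tE]]]] x y /andP[xy rxy].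
rewrite /inv xy !(stepV tE) /=; apply: L1 => // [[ep eq]].
have ep' : (r^-1)%g y = p by apply: val_inj.
have eq' : (r^-1)%g x = q by apply: val_inj.
have : y = r p by rewrite -ep' permKV.
have : x = r q by rewrite -eq' permKV.
move=> ex ey; move: xy; by rewrite ex ey ltnNge (ltnW rpq).
Qed.

Lemma step_inv n (s s' : 'S_n) (p q : 'I_n) : q = p.+1 :> nat ->
  (forall x, s' x = s (tperm p q x)) -> forall x y, inv s' x y ->
  inv s x y \/ (x = s p /\ y = s q).
Proof.
move=> pq sE x y /andP[xy]; rewrite !(stepV sE) => /(L2 pq) [h|[e1 e2]].
  by left; rewrite /inv xy h.
right; split.
  by rewrite -[x](permKV s); congr (s _); apply: val_inj.
by rewrite -[y](permKV s); congr (s _); apply: val_inj.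
Qed.

Lemma wb_cons n (s s' t : 'S_n) : wb_step s s' -> wb_le s' t -> wb_le s t.
Proof.
move=> st; elim=> [|r u _ IH ru]; first by apply: wb_next st; apply: wb_refl.
exact: wb_next IH ru.
Qed.

Lemma find_step n (s t : 'S_n) : (forall x y, inv s x y -> inv t x y) -> s <> t ->
  exists p q : 'I_n, [/\ q = p.+1 :> nat, s p < s q & inv t (s p) (s q)].
Proof.
move=> H nst.
case: (boolP [exists p : 'I_n, exists q : 'I_n,
   [&& (val q == (val p).+1), s p < s q & inv t (s p) (s q)]]).
  move=> /existsP[p /existsP[q /and3P[/eqP a b c]]]; by exists p, q.
move=> /negP nE; exfalso; apply: nst.
have fid := @incr_id n (fun i => (t^-1)%g (s i)).
apply/permP => i.
have e : (t^-1)%g (s i) = i.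
  apply: fid => a b ab.
  have neq : s a != s b.
    apply/negP => /eqP /perm_inj e; move: ab; rewrite e; lia.
  case: (ltngtP (s a) (s b)) => [sab|sba|sab].
  - rewrite ltn_neqAle; apply/andP; split.
      by apply/negP => /eqP /val_inj /perm_inj /perm_inj e; move: ab; rewrite e; lia.
    rewrite leqNgt; apply/negP => tl; apply: nE; apply/existsP; exists a; apply/existsP; exists b.
    by rewrite sab /inv sab tl /= ab eqxx.
  - have : inv s (s b) (s a) by rewrite /inv sba !permK /= ab.
    by move/H/andP=> [].
  - by move: neq; rewrite (val_inj sab) eqxx.
by rewrite -[s i](permKV t) e.
Qed.

Definition invset n (s : 'S_n) : {set 'I_n * 'I_n} := [set xy | inv s xy.1 xy.2].

Lemma incl_wb n (s t : 'S_n) : (forall x y, inv s x y -> inv t x y) -> wb_le s t.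
Proof.
move: {2}#|invset t :\: invset s| (leqnn #|invset t :\: invset s|) => k.
elim: k s => [|k IH] s hk H.
  case: (eqVneq s t) => [->|nst]; first exact: wb_refl.
  have [p [q [pq spq tpq]]] := find_step H (elimN eqP nst).
  have : (s p, s q) \in invset t :\: invset s.
    rewrite !inE /= tpq andbT /inv !permK; lia.
  by move=> h; move: hk; rewrite leqn0 => /eqP/cards0_eq h0; rewrite h0 inE in h.
case: (eqVneq s t) => [->|nst]; first exact: wb_refl.
have [p [q [pq spq tpq]]] := find_step H (elimN eqP nst).
pose s' := (tperm p q * s)%g.
have sE : forall x, s' x = s (tperm p q x) by move=> x; rewrite permM.
have st : wb_step s s' by exists p, q.
apply: (wb_cons st); apply: IH; last first.
  by move=> x y /(step_inv pq sE) [/H //|[-> ->]].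
have sub : invset t :\: invset s' \proper invset t :\: invset s.
  apply/properP; split.
    apply/subsetP => xy; rewrite !inE => /andP[n1 ->]; rewrite andbT.
    by apply: contra n1 => /(step_incl st).
  exists (s p, s q); first by rewrite !inE /= tpq andbT /inv !permK; lia.
  rewrite !inE /= tpq andbT negbK /inv spq !(stepV sE) /= !permK.
  by rewrite tpermL tpermR pq.
by have := proper_card sub; lia.
Qed.

Theorem theorem15 (n : nat) (s t : 'S_n) :
  wb_le s t <-> pp_le (Psi s) (Psi t).
Proof.
rewrite pp_le_iff; split; last exact: incl_wb.
elim=> [//|r u _ IH ru] x y /IH; exact: step_incl.
Qed.
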